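(* Let $X$ be a finite set with $|X|\ge5$, $k$ an integer with $5<k<|X|-5$, $\mathfrak{C}$ a nonempty symmetric family of choice functions for $\binom{X}{k}$, $\mathcal{F}$ the set of simple averaging functions for $\mathfrak{C}$, and assume $r(\mathcal{F})=2$. Let $\bar a^*=(a^*_1,a^*_2,a^*_3,a^*_4)\in X^4$ be without repetition. Then there is $g\in\mathcal{F}_{[4]}$ such that $g(\bar b)=b_1$ for every $\bar b\in X^4$ with a repetition, and $g(\bar a^* )=a^*_2$.
   Context: $\binom{X}{k}=\{Y\subseteq X:|Y|=k\}$; choice functions satisfy $c(Y)\in Y$. Symmetric: closed under $c\mapsto\pi*c$, $(\pi*c)(Y)=\pi^{-1}(c(\pi(Y)))$. $\mathcal{F}_{[r]}$: functions $f:X^r\to X$ with $f(a,\dots,a)=a$ such that for all $c_1,\dots,c_r\in\mathfrak{C}$, $Y\mapsto f(c_1(Y),\dots,c_r(Y))$ is in $\mathfrak{C}$. A monarchy is a projection. $r(\mathcal{F})=\min\{r:\text{some } f\in\mathcal{F}_{[r]}\text{ is not a monarchy}\}$. *)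

(* Defs.v *)
From mathcomp Require Import all_boot all_fingroup.
Set Implicit Arguments. Unset Strict Implicit. Unset Printing Implicit Defensive.

Section Defs.
Variables (X : finType) (k : nat).

Definition kset := {Y : {set X} | #|Y| == k}.

Definition choice_fun (c : {ffun kset -> X}) : Prop :=
  forall Y : kset, c Y \in sval Y.

Lemma kimg_card (p : {perm X}) (Y : kset) : #|p @: sval Y| == k.
Proof. by rewrite card_imset; [exact: (svalP Y) | exact: perm_inj]. Qed.

Definition kimg (p : {perm X}) (Y : kset) : kset := exist _ (p @: sval Y) (kimg_card p Y).

Definition pact (p : {perm X}) (c : {ffun kset -> X}) : {ffun kset -> X} :=
  [ffun Y => (p^-1)%g (c (kimg p Y))].

Definition choice_family (C : {set {ffun kset -> X}}) : Prop :=
  forall c, c \in C -> choice_fun c.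

Definition symmetric_family (C : {set {ffun kset -> X}}) : Prop :=
  forall (p : {perm X}) c, c \in C -> pact p c \in C.

Definition Fr (C : {set {ffun kset -> X}}) (r : nat) (f : {ffun 'I_r -> X} -> X) : Prop :=
  (forall a : X, f [ffun _ => a] = a) /\
  (forall cs : 'I_r -> {ffun kset -> X}, (forall i, cs i \in C) ->
     [ffun Y => f [ffun i => cs i Y]] \in C).

Definition monarchy (r : nat) (f : {ffun 'I_r -> X} -> X) : Prop :=
  exists i : 'I_r, forall x, f x = x i.

Definition rF_eq (C : {set {ffun kset -> X}}) (r : nat) : Prop :=
  (exists f : {ffun 'I_r -> X} -> X, Fr C f /\ ~ monarchy f) /\
  (forall r' (f : {ffun 'I_r' -> X} -> X), r' < r -> Fr C f -> monarchy f).

End Defs.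

(* Main.v *)
Require Import Defs.
From mathcomp Require Import all_boot all_fingroup.
Set Implicit Arguments. Unset Strict Implicit. Unset Printing Implicit Defensive.


Section Clone.
Variables (X : finType) (k : nat) (C : {set {ffun kset X k -> X}}).
Hypothesis hCs : symmetric_family C.

Lemma kimgK (p : {perm X}) (Y : kset X k) : kimg p^-1 (kimg p Y) = Y.
Proof.
apply: val_inj => /=. rewrite -imset_comp.
rewrite (eq_imset _ (fun x => permK p x)). by rewrite imset_id.
Qed.

Lemma Fr_comp r m (g : {ffun 'I_m -> X} -> X) (hs : 'I_m -> {ffun 'I_r -> X} -> X) :
  Fr C g -> (forall j, Fr C (hs j)) -> Fr C (fun x => g [ffun j => hs j x]).
Proof.
move=> [g1 g2] hh; split.
- move=> a. rewrite -[RHS](g1 a). congr g. apply/ffunP=> j. rewrite !ffunE.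
  by case: (hh j) => ->.
- move=> cs hcs.
  have := g2 (fun j => [ffun Y => hs j [ffun i => cs i Y]]) (fun j => (hh j).2 cs hcs).
  congr (_ \in C). apply/ffunP=> Y. rewrite !ffunE. congr g. apply/ffunP=> j.
  by rewrite !ffunE.
Qed.

Lemma Fr_proj r (i : 'I_r) : Fr C (fun x => x i).
Proof.
split; first by move=> a; rewrite ffunE.
move=> cs hcs. have -> // : [ffun Y => [ffun i0 => cs i0 Y] i] = cs i.
by apply/ffunP=> Y; rewrite !ffunE.
Qed.

Lemma Fr_conj r (p : {perm X}) (f : {ffun 'I_r -> X} -> X) :
  Fr C f -> Fr C (fun x => (p^-1)%g (f [ffun i => p (x i)])).
Proof.
move=> [f1 f2]; split.
- move=> a.
  have -> : [ffun i : 'I_r => p ([ffun _ : 'I_r => a] i)] = [ffun _ : 'I_r => p a].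
    by apply/ffunP=> i; rewrite !ffunE.
  by rewrite f1 permK.
- move=> cs hcs. pose cs' := fun i => pact p^-1 (cs i).
  have hc' : forall i, cs' i \in C by move=> i; apply: hCs.
  have := hCs p (f2 cs' hc'). congr (_ \in C). apply/ffunP=> Y.
  rewrite !ffunE. congr (_ _). congr f. apply/ffunP=> i.
  by rewrite !ffunE /cs' /pact invgK kimgK.
Qed.


Lemma Fr_ext r (f g : {ffun 'I_r -> X} -> X) : (forall x, f x = g x) -> Fr C f -> Fr C g.
Proof.
move=> e [f1 f2]; split; first by move=> a; rewrite -e.
move=> cs hcs. have := f2 cs hcs. congr (_ \in C). by apply/ffunP=> Y; rewrite !ffunE e.
Qed.

Definition mk2 (a b : X) : {ffun 'I_2 -> X} := [ffun i => if i == ord0 then a else b].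
Definition app2 (h : {ffun 'I_2 -> X} -> X) a b := h (mk2 a b).

Lemma mk2_eta (x : {ffun 'I_2 -> X}) : x = mk2 (x ord0) (x ord_max).
Proof.
apply/ffunP=> i; rewrite ffunE. case: i => [[|[|//]] hi] /=.
- by congr (x _); apply: val_inj.
- by congr (x _); apply: val_inj.
Qed.

Lemma idem2 h a : Fr C h -> app2 h a a = a.
Proof.
move=> [h1 _]. rewrite /app2 -[RHS](h1 a). congr h. apply/ffunP=> i.
by rewrite !ffunE; case: ifP.
Qed.

Lemma Fr_b2 r (h : {ffun 'I_2 -> X} -> X) (u v : {ffun 'I_r -> X} -> X) :
  Fr C h -> Fr C u -> Fr C v -> Fr C (fun x => app2 h (u x) (v x)).
Proof.
move=> hh hu hv.
have := Fr_comp (hs := fun j => if j == ord0 then u else v) hh.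
move=> H. apply: Fr_ext (H _); last by move=> j; case: ifP.
move=> x. rewrite /app2 /mk2. congr h. apply/ffunP=> j. rewrite !ffunE. by case: ifP.
Qed.

Hypothesis hCc : choice_family C.
Hypothesis hC0 : C != set0.
Hypothesis hk : 1 < k.
Hypothesis hkX : k < #|X|.

Lemma tperm_imset (x y : X) (A : {set X}) : x \in A -> y \in A -> tperm x y @: A = A.
Proof.
move=> hx hy. apply/setP=> u. apply/imsetP/idP.
- by case=> v hv ->; case: tpermP => // ->.
- move=> hu; exists (tperm x y u); last by rewrite tpermK.
  by case: tpermP => // ->.
Qed.

Lemma cons2 h : Fr C h -> forall a b, app2 h a b = a \/ app2 h a b = b.
Proof.
move=> hh a b. case: (eqVneq a b) => [<-|nab]; first by left; exact: idem2.
set z := app2 h a b. case: (eqVneq z a) => [|za]; first by left.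
case: (eqVneq z b) => [|zb]; first by right. exfalso.
case/set0Pn: hC0 => c0 hc0.
have cY : #|[set x in take k (enum X)]| == k.
  rewrite cardsE. move: (take_uniq k (enum_uniq X)) => /card_uniqP ->.
  by rewrite size_take -cardE hkX.
pose Y0 : kset X k := exist (fun Y : {set X} => #|Y| == k) _ cY.
pose x0 := c0 Y0. have hx0 : x0 \in sval Y0 := hCc hc0 Y0.
have [y0 hy0 nxy] : exists2 y0, y0 \in sval Y0 & x0 != y0.
  have : 1 < #|sval Y0| by rewrite (eqP (svalP Y0)).
  case/card_gt1P => u [v [hu hv nuv]].
  case: (eqVneq x0 u) => [e|]; last by exists u.
  by exists v => //; rewrite e.
have [w hw] : exists w, w \notin sval Y0.
  have : 0 < #|~: sval Y0|.
    have := cardsC (sval Y0). rewrite (eqP (svalP Y0)) => e.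
    move: hkX; rewrite -e; case: #|~: _| => //; by rewrite addn0 ltnn.
  by case/card_gt0P => w; rewrite inE => hw; exists w.
pose s1 := tperm x0 a. pose y1 := s1 y0. pose s2 := tperm y1 b.
pose pi1 := (s1 * s2)%g. pose s3 := tperm (pi1 w) z. pose pi := (pi1 * s3)%g.
have ay1 : a != y1.
  apply/eqP => e. move: nxy => /eqP; apply. apply: (@perm_inj _ s1).
  by rewrite -/y1 -e /s1 tpermL.
have pi1x0 : pi1 x0 = a by rewrite permM /s1 tpermL /s2 tpermD // eq_sym.
have pi1y0 : pi1 y0 = b by rewrite permM -/y1 /s2 tpermL.
have wx0 : w != x0 by apply: contraNneq hw => ->.
have wy0 : w != y0 by apply: contraNneq hw => ->.
have aw : pi1 w != a by rewrite -pi1x0 (inj_eq perm_inj).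
have bw : pi1 w != b by rewrite -pi1y0 (inj_eq perm_inj).
have pix0 : pi x0 = a by rewrite permM pi1x0 /s3 tpermD // eq_sym.
have piy0 : pi y0 = b by rewrite permM pi1y0 /s3 tpermD // eq_sym.
have piw : pi w = z by rewrite permM /s3 tpermL.
pose Y := kimg pi Y0.
pose pi' := (tperm x0 y0 * pi)%g.
have eY : kimg pi' Y0 = Y.
  apply: val_inj; change (pi' @: sval Y0 = pi @: sval Y0). rewrite -[in RHS](tperm_imset hx0 hy0) -imset_comp.
  by apply: eq_imset => u; rewrite permM.
pose c1 := pact pi^-1 c0. pose c2 := pact pi'^-1 c0.
have c1Y : c1 Y = a by rewrite /c1 /pact ffunE invgK kimgK.
have c2Y : c2 Y = b.
  by rewrite /c2 -eY /pact ffunE invgK kimgK permM tpermL.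
pose cs := fun i : 'I_2 => if i == ord0 then c1 else c2.
have hcs : forall i, cs i \in C by move=> i; rewrite /cs; case: ifP => _; apply: hCs.
have := hCc (hh.2 cs hcs) Y. rewrite ffunE.
have -> : [ffun i => cs i Y] = mk2 a b.
  apply/ffunP=> i; rewrite !ffunE /cs; by case: ifP.
rewrite -/(app2 h a b) -/z /= => /imsetP [u hu].
rewrite -piw => /perm_inj e. by move: hw; rewrite e hu.
Qed.

End Clone.


Definition nb (b : seq bool) i := nth false b i.
Definition opN (b : seq bool) := [:: ~~ nb b 1; ~~ nb b 0; ~~ nb b 3; ~~ nb b 2; ~~ nb b 5; ~~ nb b 4; ~~ nb b 6].
Definition opT (b : seq bool) := [:: nb b 1; nb b 0; nb b 4; nb b 5; nb b 2; nb b 3; nb b 6].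
Definition opI (b : seq bool) := [:: nb b 2; nb b 3; nb b 0 && nb b 2; nb b 1 && nb b 3;
   nb b 5 && nb b 6; nb b 4 && nb b 6; [&& nb b 4, nb b 5 & nb b 6]].
Definition bor (b c : seq bool) := [seq nb b i || nb c i | i <- iota 0 7].
Definition band (b c : seq bool) := [seq nb b i && nb c i | i <- iota 0 7].
Definition bF := nseq 7 false.
Definition bT := nseq 7 true.
Definition bA := [:: true; true; false; false; false; false; false].
Inductive ins := iN of nat | iT of nat | iI of nat | iOr of nat & nat | iAnd of nat & nat.
Definition exec1 (L : seq (seq bool)) (i : ins) : seq bool :=
  match i with
  | iN n => opN (nth bF L n)
  | iT n => opT (nth bF L n)
  | iI n => opI (nth bF L n)
  | iOr n m => bor (nth bF L n) (nth bF L m)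
  | iAnd n m => band (nth bF L n) (nth bF L m)
  end.
Definition run (L : seq (seq bool)) (s : seq ins) := foldl (fun L i => rcons L (exec1 L i)) L s.
Definition certs : seq (seq bool * seq ins) := [::
  ([:: true; false; false; false; false; false; false], [:: iT 0; iOr 0 3]);
  ([:: true; false; false; false; false; false; true], [:: iT 0; iOr 0 3; iN 0; iI 5; iAnd 4 6]);
  ([:: true; false; false; false; false; true; false], [:: iT 0; iOr 0 3; iN 0; iI 5; iAnd 4 6]);
  ([:: true; false; false; false; false; true; true], [:: iT 0; iOr 0 3; iN 0; iI 5; iAnd 4 6]);
  ([:: true; false; false; false; true; false; false], [:: iN 0; iI 3; iT 4; iAnd 4 5]);
  ([:: true; false; false; false; true; false; true], [:: iN 0; iI 3; iT 4; iAnd 4 5]);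
  ([:: true; false; false; false; true; true; false], [:: iN 0; iI 3; iT 0; iI 5; iAnd 4 6]);
  ([:: true; false; false; false; true; true; true], [:: iN 0; iI 3; iT 0; iI 5; iAnd 4 6]);
  ([:: true; false; false; true; false; false; false], [:: iI 0; iT 3; iOr 3 4]);
  ([:: true; false; false; true; false; false; true], [:: iI 0; iT 3; iOr 3 4]);
  ([:: true; false; false; true; false; true; false], [:: iI 0; iT 3; iOr 3 4]);
  ([:: true; false; false; true; false; true; true], [:: iT 0; iOr 0 3; iI 0; iT 5; iOr 5 6; iAnd 4 7]);
  ([:: true; false; false; true; true; false; false], [:: iI 0; iT 0; iI 4; iOr 3 5]);
  ([:: true; false; false; true; true; false; true], [:: iN 0; iI 3; iT 3; iI 5; iOr 4 6]);
  ([:: true; false; false; true; true; true; false], [:: iI 0; iT 3; iOr 3 4]);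
  ([:: true; false; false; true; true; true; true], [:: iI 0; iOr 0 3; iT 3; iI 5; iAnd 4 6]);
  ([:: true; false; true; false; false; false; false], [:: iT 0; iOr 0 3; iN 0; iT 5; iI 6; iAnd 4 7]);
  ([:: true; false; true; false; false; false; true], [:: iT 0; iOr 0 3; iN 0; iT 5; iI 6; iAnd 4 7]);
  ([:: true; false; true; false; false; true; false], [:: iT 0; iI 0; iOr 3 4; iI 3; iT 6; iT 4; iAnd 6 8; iOr 7 9; iAnd 5 10]);
  ([:: true; false; true; false; false; true; true], [:: iT 0; iI 3; iI 0; iT 5; iAnd 4 6; iI 6; iOr 7 8]);
  ([:: true; false; true; false; true; false; false], [:: iT 0; iI 3; iT 4; iOr 4 5]);
  ([:: true; false; true; false; true; false; true], [:: iT 0; iOr 0 3; iI 3; iT 5; iOr 5 6; iAnd 4 7]);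
  ([:: true; false; true; false; true; true; false], [:: iN 0; iT 0; iOr 3 4; iI 4; iT 6; iAnd 5 7]);
  ([:: true; false; true; false; true; true; true], [:: iT 0; iI 3; iN 0; iT 5; iOr 5 6; iAnd 4 7]);
  ([:: true; false; true; true; false; false; false], [:: iI 0; iN 0; iT 0; iOr 4 5; iAnd 3 6]);
  ([:: true; false; true; true; false; false; true], [:: iI 0; iN 0; iT 0; iOr 4 5; iAnd 3 6]);
  ([:: true; false; true; true; false; true; false], [:: iI 0; iN 0; iT 0; iOr 4 5; iAnd 3 6]);
  ([:: true; false; true; true; false; true; true], [:: iI 0; iN 0; iT 4; iOr 4 5; iAnd 3 6]);
  ([:: true; false; true; true; true; false; false], [:: iI 0; iT 3; iAnd 3 4]);
  ([:: true; false; true; true; true; false; true], [:: iI 0; iT 3; iAnd 3 4]);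
  ([:: true; false; true; true; true; true; false], [:: iI 0; iT 0; iI 4; iAnd 3 5]);
  ([:: true; false; true; true; true; true; true], [:: iN 0; iT 3; iOr 3 4]);
  ([:: true; true; false; false; false; false; false], [:: ]);
  ([:: true; true; false; false; false; false; true], [:: iN 0; iI 3]);
  ([:: true; true; false; false; false; true; false], [:: iT 0; iAnd 0 3]);
  ([:: true; true; false; false; false; true; true], [:: iN 0; iI 3]);
  ([:: true; true; false; false; true; false; false], [:: iT 0; iAnd 0 3]);
  ([:: true; true; false; false; true; false; true], [:: iN 0; iI 3]);
  ([:: true; true; false; false; true; true; false], [:: iT 0; iAnd 0 3]);
  ([:: true; true; false; false; true; true; true], [:: iN 0; iI 3]);
  ([:: true; true; false; true; false; false; false], [:: iT 0; iAnd 0 3]);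
  ([:: true; true; false; true; false; false; true], [:: iN 0; iT 3; iI 4]);
  ([:: true; true; false; true; false; true; false], [:: iN 0; iI 3; iT 4; iOr 4 5; iAnd 0 6]);
  ([:: true; true; false; true; false; true; true], [:: iN 0; iI 3; iT 4; iOr 4 5]);
  ([:: true; true; false; true; true; false; false], [:: iT 0; iAnd 0 3]);
  ([:: true; true; false; true; true; false; true], [:: iT 0; iAnd 0 3; iI 0; iI 3; iOr 5 6; iAnd 4 7]);
  ([:: true; true; false; true; true; true; false], [:: iN 0; iI 3; iT 4; iOr 4 5]);
  ([:: true; true; false; true; true; true; true], [:: iT 0; iAnd 0 3; iI 0; iT 5; iI 6; iAnd 4 7]);
  ([:: true; true; true; false; false; false; false], [:: iT 0; iAnd 0 3]);
  ([:: true; true; true; false; false; false; true], [:: iN 0; iT 3; iI 4]);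
  ([:: true; true; true; false; false; true; false], [:: iT 0; iAnd 0 3]);
  ([:: true; true; true; false; false; true; true], [:: iT 0; iAnd 0 3; iI 0; iI 3; iOr 5 6; iAnd 4 7]);
  ([:: true; true; true; false; true; false; false], [:: iN 0; iI 3; iT 4; iOr 4 5; iAnd 0 6]);
  ([:: true; true; true; false; true; false; true], [:: iN 0; iI 3; iT 4; iOr 4 5]);
  ([:: true; true; true; false; true; true; false], [:: iN 0; iI 3; iT 4; iOr 4 5]);
  ([:: true; true; true; false; true; true; true], [:: iT 0; iAnd 0 3; iI 0; iT 5; iI 6; iAnd 4 7]);
  ([:: true; true; true; true; false; false; false], [:: iT 0; iAnd 0 3]);
  ([:: true; true; true; true; false; false; true], [:: iT 0; iI 0; iAnd 3 4]);
  ([:: true; true; true; true; false; true; false], [:: iI 0; iT 3; iAnd 3 4]);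
  ([:: true; true; true; true; false; true; true], [:: iT 0; iI 0; iAnd 3 4; iT 4; iAnd 5 6; iAnd 0 7]);
  ([:: true; true; true; true; true; false; false], [:: iI 0; iT 3; iAnd 3 4]);
  ([:: true; true; true; true; true; false; true], [:: iT 0; iI 0; iAnd 3 4; iT 4; iAnd 5 6; iAnd 0 7]);
  ([:: true; true; true; true; true; true; false], [:: iI 0; iT 3; iAnd 3 4])].

Definition cert b := (nth (bF, [::]) certs (find (fun p => p.1 == b) certs)).2.
Lemma clos_ok b0 b1 b2 b3 b4 b5 b6 : let b := [:: b0; b1; b2; b3; b4; b5; b6] in
  nb b 0 -> b != bT -> bA \in run [:: b; bF; bT] (cert b).
Proof. by case: b0; case: b1; case: b2; case: b3; case: b4; case: b5; case: b6; vm_compute. Qed.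


Section Real.
Variables (X : finType) (k : nat) (C : {set {ffun kset X k -> X}}).
Hypothesis hCs : symmetric_family C.

Definition Rz (S : {set X * X}) := exists h, Fr C h /\
  forall x y, x != y -> app2 h x y = if (x, y) \in S then y else x.

Lemma mk2_0 (x y : X) : mk2 x y ord0 = x.
Proof. by rewrite ffunE. Qed.
Lemma mk2_1 (x y : X) : mk2 x y ord_max = y.
Proof. by rewrite ffunE. Qed.

Lemma Rz_ext (S S' : {set X * X}) : (forall x y, x != y -> ((x, y) \in S) = ((x, y) \in S')) -> Rz S -> Rz S'.
Proof. move=> e [h [hF hs]]; exists h; split => // x y nxy; by rewrite hs // e. Qed.

Lemma Rz_set0 : Rz set0.
Proof.
exists (fun x => x ord0); split; first exact: Fr_proj.
by move=> x y _; rewrite inE /app2 mk2_0.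
Qed.

Lemma Rz_setT : Rz setT.
Proof.
exists (fun x => x ord_max); split; first exact: Fr_proj.
by move=> x y _; rewrite inE /app2 mk2_1.
Qed.

Definition pr0 := fun x : {ffun 'I_2 -> X} => x ord0.
Definition pr1 := fun x : {ffun 'I_2 -> X} => x ord_max.

Lemma Rz_U (S1 S2 : {set X * X}) : Rz S1 -> Rz S2 -> Rz (S1 :|: S2).
Proof.
move=> [h1 [F1 s1]] [h2 [F2 s2]].
exists (fun x => app2 h1 (app2 h2 (pr0 x) (pr1 x)) (pr1 x)); split.
  by apply: Fr_b2 => //; [apply: Fr_b2 => //|]; apply: Fr_proj.
move=> x y nxy. rewrite /pr0 /pr1 {1 3}/app2 !mk2_0 !mk2_1 -/(app2 h2 x y).
  rewrite s2 // inE. case: ((x, y) \in S2) => /=; rewrite ?orbT ?orbF; first exact: (idem2 _ F1).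
by rewrite s1.
Qed.

Lemma Rz_I (S1 S2 : {set X * X}) : Rz S1 -> Rz S2 -> Rz (S1 :&: S2).
Proof.
move=> [h1 [F1 s1]] [h2 [F2 s2]].
exists (fun x => app2 h1 (pr0 x) (app2 h2 (pr0 x) (pr1 x))); split.
  by apply: Fr_b2 => //; [apply: Fr_proj|apply: Fr_b2 => //]; apply: Fr_proj.
move=> x y nxy. rewrite /pr0 /pr1 {1 3}/app2 !mk2_0 !mk2_1 -/(app2 h2 x y).
rewrite s2 // inE. case: ((x, y) \in S2); rewrite ?andbT ?andbF; first by rewrite s1.
exact: (idem2 _ F1).
Qed.

Lemma Rz_N (S : {set X * X}) : Rz S -> Rz [set xy | (xy.2, xy.1) \notin S].
Proof.
move=> [h [F s]]. exists (fun x => app2 h (pr1 x) (pr0 x)); split.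
  by apply: Fr_b2 => //; apply: Fr_proj.
move=> x y nxy. rewrite /pr0 /pr1 /app2 mk2_0 mk2_1 -/(app2 h y x) s 1?eq_sym // inE /=.
by case: ((y, x) \in S).
Qed.

Lemma Rz_conj (p : {perm X}) (S : {set X * X}) : Rz S -> Rz [set xy | (p xy.1, p xy.2) \in S].
Proof.
move=> [h [F s]]. exists (fun x => (p^-1)%g (h [ffun i => p (x i)])); split.
  exact: Fr_conj.
move=> x y nxy. rewrite inE /=.
rewrite /app2.
have -> : [ffun i : 'I_2 => p (mk2 x y i)] = mk2 (p x) (p y) :> {ffun 'I_2 -> X}.
  by apply/ffunP=> i; rewrite !ffunE; case: ifP.
rewrite -/(app2 h (p x) (p y)) s ?(inj_eq perm_inj) //.
by case: ifP; rewrite permK.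
Qed.

Lemma Rz_big (I : finType) (P : pred I) (F : I -> {set X * X}) :
  (forall i, P i -> Rz (F i)) -> Rz (\bigcap_(i | P i) F i).
Proof.
move=> hF. apply: (big_ind Rz) => //; [exact: Rz_setT|exact: Rz_I].
Qed.

End Real.


Lemma fresh (X : finType) (s : seq X) : size s < #|X| -> exists z, z \notin s.
Proof.
move=> hs. case: (boolP [exists z, z \notin s]) => [/existsP//|].
rewrite negb_exists => /forallP H. exfalso.
have : #|X| <= size s.
  apply: leq_trans (card_size s). apply: subset_leq_card.
  by apply/subsetP => z _; move: (H z); rewrite negbK.
by rewrite leqNgt hs.
Qed.

Section Orb.
Variables (X : finType) (k : nat) (C : {set {ffun kset X k -> X}}).
Hypothesis hCs : symmetric_family C.
Variables (p q : X).
Hypothesis hpq : p != q.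
Hypothesis hX : 4 < #|X|.

Definition orb (x y : X) : nat :=
  if (x == p) && (y == q) then 0 else if (x == q) && (y == p) then 1
  else if x == p then 2 else if y == p then 3 else if x == q then 4
  else if y == q then 5 else 6.

Lemma orb_lt7 x y : orb x y < 7.
Proof. rewrite /orb; by repeat case: ifP. Qed.

Definition setOf (b : seq bool) : {set X * X} := [set xy | nb b (orb xy.1 xy.2)].
Definition Rb b := Rz C (setOf b).

Lemma hqp : q != p. Proof. by rewrite eq_sym. Qed.

Lemma orb_pq : orb p q = 0. Proof. by rewrite /orb !eqxx. Qed.
Lemma orb_qp : orb q p = 1. Proof. by rewrite /orb !eqxx (negbTE hpq) (negbTE hqp). Qed.
Lemma orb_pw w : w != p -> w != q -> orb p w = 2.
Proof. move=> /negbTE h1 /negbTE h2. by rewrite /orb eqxx h1 h2 (negbTE hpq). Qed.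
Lemma orb_wp w : w != p -> w != q -> orb w p = 3.
Proof. move=> /negbTE h1 /negbTE h2. by rewrite /orb eqxx h1 h2 (negbTE hpq). Qed.
Lemma orb_qw w : w != p -> w != q -> orb q w = 4.
Proof. move=> /negbTE h1 /negbTE h2. by rewrite /orb eqxx h1 h2 (negbTE hqp). Qed.
Lemma orb_wq w : w != p -> w != q -> orb w q = 5.
Proof. move=> /negbTE h1 /negbTE h2. by rewrite /orb eqxx h1 h2 (negbTE hqp). Qed.
Lemma orb_xy x y : x != p -> x != q -> y != p -> y != q -> orb x y = 6.
Proof. move=> /negbTE h1 /negbTE h2 /negbTE h3 /negbTE h4. by rewrite /orb h1 h2 h3 h4. Qed.

Variant orb_spec (x y : X) : nat -> Prop :=
| OS1 of x = p & y = q : orb_spec x y 0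
| OS2 of x = q & y = p : orb_spec x y 1
| OS3 of x = p & y != p & y != q : orb_spec x y 2
| OS4 of y = p & x != p & x != q : orb_spec x y 3
| OS5 of x = q & y != p & y != q : orb_spec x y 4
| OS6 of y = q & x != p & x != q : orb_spec x y 5
| OS7 of x != p & x != q & y != p & y != q : orb_spec x y 6.

Lemma orbP x y : x != y -> orb_spec x y (orb x y).
Proof.
move=> nxy. case: (eqVneq x p) => [ex|xp].
  subst x. have yp : y != p by rewrite eq_sym.
  case: (eqVneq y q) => [->|yq]; first by rewrite orb_pq; constructor.
  by rewrite orb_pw //; constructor.
case: (eqVneq x q) => [ex|xq].
  subst x. have yq : y != q by rewrite eq_sym.
  case: (eqVneq y p) => [->|yp]; first by rewrite orb_qp; constructor.
  by rewrite orb_qw //; constructor.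
case: (eqVneq y p) => [->|yp]; first by rewrite orb_wp //; constructor.
case: (eqVneq y q) => [->|yq]; first by rewrite orb_wq //; constructor.
by rewrite orb_xy //; constructor.
Qed.

Lemma Rb_N b : Rb b -> Rb (opN b).
Proof.
move=> H. apply: Rz_ext (Rz_N H) => x y nxy. rewrite !inE /=.
case: (orbP nxy) => [->->|->->|->|->|->|->|]; intros;
  rewrite ?orb_pq ?orb_qp ?orb_pw ?orb_wp ?orb_qw ?orb_wq ?orb_xy //.
Qed.

Lemma Rb_T b : Rb b -> Rb (opT b).
Proof.
move=> H. apply: Rz_ext (Rz_conj hCs (tperm p q) H) => x y nxy. rewrite !inE /=.
case: (orbP nxy) => [->->|->->|->|->|->|->|]; intros;
  rewrite ?tpermL ?tpermR ?(tpermD _ _) 1?eq_sym //;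
  rewrite ?orb_pq ?orb_qp ?orb_pw ?orb_wp ?orb_qw ?orb_wq ?orb_xy //.
Qed.

Lemma nb_bor b c i : i < 7 -> nb (bor b c) i = nb b i || nb c i.
Proof. by move=> hi; rewrite /nb /bor (nth_map 0) ?size_iota // nth_iota. Qed.
Lemma nb_band b c i : i < 7 -> nb (band b c) i = nb b i && nb c i.
Proof. by move=> hi; rewrite /nb /band (nth_map 0) ?size_iota // nth_iota. Qed.

Lemma Rb_or b c : Rb b -> Rb c -> Rb (bor b c).
Proof.
move=> Hb Hc. apply: Rz_ext (Rz_U Hb Hc) => x y _. by rewrite !inE /= nb_bor // orb_lt7.
Qed.
Lemma Rb_and b c : Rb b -> Rb c -> Rb (band b c).
Proof.
move=> Hb Hc. apply: Rz_ext (Rz_I Hb Hc) => x y _. by rewrite !inE /= nb_band // orb_lt7.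
Qed.
Lemma Rb_F : Rb bF.
Proof. apply: Rz_ext (Rz_set0 C) => x y _. by rewrite !inE /nb nth_nseq; case: ifP. Qed.
Lemma Rb_TT : Rb bT.
Proof. apply: Rz_ext (Rz_setT C) => x y _. by rewrite !inE /nb nth_nseq orb_lt7. Qed.


Lemma fresh2 : exists z, z \notin [:: p; q].
Proof. apply: fresh => /=. by apply: leq_trans hX. Qed.
Lemma fresh3 w : exists z, z \notin [:: p; q; w].
Proof. apply: fresh => /=. by apply: leq_trans hX. Qed.
Lemma fresh4 x y : exists z, z \notin [:: p; q; x; y].
Proof. apply: fresh => /=. by apply: leq_trans hX. Qed.

Lemma tq_o z w : w != q -> w != z -> tperm q z w = w.
Proof. by move=> h1 h2; apply: tpermD; rewrite eq_sym. Qed.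

Lemma opI0 b : nb (opI b) 0 = nb b 2. Proof. by []. Qed.
Lemma opI1 b : nb (opI b) 1 = nb b 3. Proof. by []. Qed.
Lemma opI2 b : nb (opI b) 2 = nb b 0 && nb b 2. Proof. by []. Qed.
Lemma opI3 b : nb (opI b) 3 = nb b 1 && nb b 3. Proof. by []. Qed.
Lemma opI4 b : nb (opI b) 4 = nb b 5 && nb b 6. Proof. by []. Qed.
Lemma opI5 b : nb (opI b) 5 = nb b 4 && nb b 6. Proof. by []. Qed.
Lemma opI6 b : nb (opI b) 6 = [&& nb b 4, nb b 5 & nb b 6]. Proof. by []. Qed.

Lemma Rb_I b : Rb b -> Rb (opI b).
Proof.
move=> H.
have HB := Rz_big (P := fun z => (z != p) && (z != q)) (fun z _ => Rz_conj hCs (tperm q z) H).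
apply: Rz_ext HB => x y nxy.
have E : forall z u v, ((u, v) \in [set xy | (tperm q z xy.1, tperm q z xy.2) \in setOf b])
   = nb b (orb (tperm q z u) (tperm q z v)) by move=> z u v; rewrite !inE.
rewrite inE /=.
case: (orbP nxy) => [->->|->->|-> yp yq|-> xp xq|-> yp yq|-> xp xq|xp xq yp yq];
  apply/bigcapP/idP => [Hz|Hb z /andP [zp zq]]; rewrite ?E.
- case: fresh2 => z; rewrite !inE !negb_or => /andP [zp zq].
  move: (Hz z); rewrite zp zq E tpermL (tq_o hpq) 1?eq_sym // orb_pw // opI0; exact.
- by rewrite tpermL (tq_o hpq) 1?eq_sym // orb_pw // -opI0.
- case: fresh2 => z; rewrite !inE !negb_or => /andP [zp zq].
  move: (Hz z); rewrite zp zq E tpermL (tq_o hpq) 1?eq_sym // orb_wp // opI1; exact.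
- by rewrite tpermL (tq_o hpq) 1?eq_sym // orb_wp // -opI1.
- rewrite opI2; apply/andP; split.
    move: (Hz y); rewrite yp yq E tpermR (tq_o hpq) 1?eq_sym // orb_pq; exact.
  case: (fresh3 y) => z; rewrite !inE !negb_or => /and3P [zp zq zy].
  move: (Hz z); rewrite zp zq E (tq_o hpq) 1?eq_sym // (tq_o yq) 1?eq_sym // orb_pw //; exact.
- move: Hb; rewrite opI2 => /andP [h0 h2].
  case: (eqVneq z y) => [->|zy].
    by rewrite tpermR (tq_o hpq) 1?eq_sym // orb_pq.
  by rewrite (tq_o hpq) 1?eq_sym // (tq_o yq) 1?eq_sym // orb_pw.
- rewrite opI3; apply/andP; split.
    move: (Hz x); rewrite xp xq E tpermR (tq_o hpq) 1?eq_sym // orb_qp; exact.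
  case: (fresh3 x) => z; rewrite !inE !negb_or => /and3P [zp zq zx].
  move: (Hz z); rewrite zp zq E (tq_o hpq) 1?eq_sym // (tq_o xq) 1?eq_sym // orb_wp //; exact.
- move: Hb; rewrite opI3 => /andP [h0 h2].
  case: (eqVneq z x) => [->|zx].
    by rewrite tpermR (tq_o hpq) 1?eq_sym // orb_qp.
  by rewrite (tq_o hpq) 1?eq_sym // (tq_o xq) 1?eq_sym // orb_wp.
- rewrite opI4; apply/andP; split.
    move: (Hz y); rewrite yp yq E tpermR tpermL orb_wq //; exact.
  case: (fresh3 y) => z; rewrite !inE !negb_or => /and3P [zp zq zy].
  move: (Hz z); rewrite zp zq E tpermL (tq_o yq) 1?eq_sym // orb_xy //; exact.
- move: Hb; rewrite opI4 => /andP [h0 h2].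
  case: (eqVneq z y) => [->|zy].
    by rewrite tpermR tpermL orb_wq.
  by rewrite tpermL (tq_o yq) 1?eq_sym // orb_xy.
- rewrite opI5; apply/andP; split.
    move: (Hz x); rewrite xp xq E tpermR tpermL orb_qw //; exact.
  case: (fresh3 x) => z; rewrite !inE !negb_or => /and3P [zp zq zx].
  move: (Hz z); rewrite zp zq E tpermL (tq_o xq) 1?eq_sym // orb_xy //; exact.
- move: Hb; rewrite opI5 => /andP [h0 h2].
  case: (eqVneq z x) => [->|zx].
    by rewrite tpermR tpermL orb_qw.
  by rewrite tpermL (tq_o xq) 1?eq_sym // orb_xy.
- rewrite opI6; apply/and3P; split.
  + move: (Hz x); rewrite xp xq E tpermR (tq_o yq) 1?eq_sym // orb_qw //; exact.
  + move: (Hz y); rewrite yp yq E tpermR (tq_o xq) // orb_wq //; exact.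
  + case: (fresh4 x y) => z; rewrite !inE !negb_or => /and4P [zp zq zx zy].
    move: (Hz z); rewrite zp zq E (tq_o xq) 1?eq_sym // (tq_o yq) 1?eq_sym // orb_xy //; exact.
- move: Hb; rewrite opI6 => /and3P [h4 h5 h6].
  case: (eqVneq z x) => [->|zx].
    by rewrite tpermR (tq_o yq) 1?eq_sym // orb_qw.
  case: (eqVneq z y) => [->|zy].
    by rewrite tpermR (tq_o xq) // orb_wq.
  by rewrite (tq_o xq) 1?eq_sym // (tq_o yq) 1?eq_sym // orb_xy.
Qed.

End Orb.


Section Run.
Variables (X : finType) (k : nat) (C : {set {ffun kset X k -> X}}).
Hypothesis hCs : symmetric_family C.
Variables (p q : X).
Hypothesis hpq : p != q.
Hypothesis hX : 4 < #|X|.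

Notation Rb := (Rb C p q).

Lemma Rb_nth L n : (forall b, b \in L -> Rb b) -> Rb (nth bF L n).
Proof.
move=> HL. case: (ltnP n (size L)) => hn; first by apply: HL; rewrite mem_nth.
rewrite nth_default //. exact: Rb_F.
Qed.

Lemma Rb_exec L i : (forall b, b \in L -> Rb b) -> Rb (exec1 L i).
Proof.
move=> HL. case: i => [n|n|n|n m|n m] /=.
- exact: Rb_N (Rb_nth _ HL).
- exact: Rb_T (Rb_nth _ HL).
- exact: Rb_I (Rb_nth _ HL).
- exact: Rb_or (Rb_nth _ HL) (Rb_nth _ HL).
- exact: Rb_and (Rb_nth _ HL) (Rb_nth _ HL).
Qed.

Lemma Rb_run s : forall L, (forall b, b \in L -> Rb b) -> forall b, b \in run L s -> Rb b.
Proof.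
elim: s => [|i s IH] L HL //=. apply: IH => c. rewrite mem_rcons inE => /orP [/eqP->|].
  exact: Rb_exec.
exact: HL.
Qed.

Lemma Rb_A b : Rb b -> size b = 7 -> nb b 0 -> b != bT -> Rb bA.
Proof.
case: b => [|b0 [|b1 [|b2 [|b3 [|b4 [|b5 [|b6 [|]]]]]]]] //= Hb _ h0 hT.
have := clos_ok h0 hT. apply: Rb_run => c. rewrite !inE => /or3P [/eqP->|/eqP->|/eqP->] //.
- exact: Rb_F.
- exact: Rb_TT.
Qed.

End Run.


Section Init.
Variables (X : finType) (k : nat) (C : {set {ffun kset X k -> X}}).
Hypothesis hCs : symmetric_family C.
Variables (p q : X).
Hypothesis hpq : p != q.
Hypothesis hX : 4 < #|X|.
Variable T0 : {set X * X}.
Hypothesis hT0 : Rz C T0.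
Variables (a b c d : X).
Hypotheses (hab : a != b) (habT : (a, b) \in T0) (hcd : c != d) (hcdT : (c, d) \notin T0).

Definition J := \bigcap_(pi : {perm X} | (pi p, pi q) \in T0) [set xy | (pi xy.1, pi xy.2) \in T0].

Lemma RzJ : Rz C J.
Proof. apply: Rz_big => pi _. exact: (Rz_conj hCs pi hT0). Qed.

Lemma J_inv1 (s : {perm X}) u v : s p = p -> s q = q -> (u, v) \in J -> (s u, s v) \in J.
Proof.
move=> sp sq /bigcapP H. apply/bigcapP => pi hpi.
have := H (s * pi)%g. rewrite !permM sp sq => /(_ hpi). by rewrite !inE /= !permM.
Qed.

Lemma J_inv (s : {perm X}) u v : s p = p -> s q = q -> ((s u, s v) \in J) = ((u, v) \in J).
Proof.
move=> sp sq. apply/idP/idP; last exact: J_inv1.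
have sp' : (s^-1)%g p = p by rewrite -{1}sp permK.
have sq' : (s^-1)%g q = q by rewrite -{1}sq permK.
by move=> /(J_inv1 sp' sq'); rewrite !permK.
Qed.

Lemma zw : exists z0 w0, [/\ z0 != p, z0 != q, w0 != p, w0 != q & z0 != w0].
Proof.
case: (@fresh X [:: p; q] (leq_trans (isT : 2 < 5) hX)) => z0; rewrite !inE !negb_or => /andP [z1 z2].
case: (@fresh X [:: p; q; z0] (leq_trans (isT : 3 < 5) hX)) => w0; rewrite !inE !negb_or => /and3P [w1 w2 w3].
by exists z0, w0; split => //; rewrite eq_sym.
Qed.


Lemma RbA : Rb C p q bA.
Proof.
case: zw => z0 [w0 [z0p z0q w0p w0q zw0]].
pose rep i := nth (z0, w0) [:: (p, q); (q, p); (p, z0); (z0, p); (q, z0); (z0, q)] i.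
pose bJ := [seq rep i \in J | i <- iota 0 7].
have nbJ : forall i, i < 7 -> nb bJ i = (rep i \in J).
  by move=> i hi; rewrite /nb /bJ (nth_map 0) ?size_iota // nth_iota.
have hsig : forall x y, x != y -> exists s : {perm X},
    [/\ s p = p, s q = q & (s (rep (orb p q x y)).1, s (rep (orb p q x y)).2) = (x, y)].
  move=> x y nxy.
  case: (orbP hpq nxy) => [->->|->->|-> yp yq|-> xp xq|-> yp yq|-> xp xq|xp xq yp yq].
  - by exists 1%g; rewrite !perm1.
  - by exists 1%g; rewrite !perm1.
  - exists (tperm z0 y); by rewrite /rep /= tpermL (tpermD z0p yp) (tpermD z0q yq).
  - exists (tperm z0 x); by rewrite /rep /= tpermL (tpermD z0p xp) (tpermD z0q xq).
  - exists (tperm z0 y); by rewrite /rep /= tpermL (tpermD z0p yp) (tpermD z0q yq).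
  - exists (tperm z0 x); by rewrite /rep /= tpermL (tpermD z0p xp) (tpermD z0q xq).
  - pose t := tperm z0 x.
    have twp : t w0 != p by rewrite /t; case: tpermP => // ->.
    have twq : t w0 != q by rewrite /t; case: tpermP => // ->.
    have twx : t w0 != x.
      by rewrite -[x](tpermL z0 x) -/t (inj_eq perm_inj) eq_sym.
    exists (t * tperm (t w0) y)%g; rewrite /rep /= !permM.
    rewrite /t tpermL -/t (tpermD twx) 1?eq_sym // tpermL.
    by rewrite /t (tpermD z0p xp) (tpermD z0q xq) -/t (tpermD twp yp) (tpermD twq yq).
have JE : forall x y, x != y -> ((x, y) \in J) = ((x, y) \in setOf p q bJ).
  move=> x y nxy. case: (hsig x y nxy) => s [sp sq e].
  by rewrite inE /= nbJ ?orb_lt7 // -e J_inv // -surjective_pairing.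
have RbJ : Rb C p q bJ := Rz_ext JE RzJ.
apply: (Rb_A hCs hpq hX RbJ).
- by rewrite size_map size_iota.
- rewrite nbJ //. apply/bigcapP => pi hpi. by rewrite inE.
- apply/negP => /eqP EJ.
  pose t := tperm p a. pose pi := (t * tperm (t q) b)%g.
  have tqa : t q != a by rewrite -[a](tpermL p a) -/t (inj_eq perm_inj) eq_sym.
  have pip : pi p = a by rewrite /pi permM /t tpermL -/t (tpermD tqa) // eq_sym.
  have piq : pi q = b by rewrite /pi permM tpermL.
  have nxy : (pi^-1)%g c != (pi^-1)%g d by rewrite (inj_eq perm_inj).
  have := JE _ _ nxy. rewrite inE /= EJ /nb nth_nseq orb_lt7 => /bigcapP H.
  have := H pi. rewrite pip piq inE /= !permKV => /(_ habT) hh.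
  by move: hcdT; rewrite hh.
Qed.

End Init.


Section Sem.
Variable T : eqType.
Definition Pf (u v x y : T) := if ((x == u) && (y == v)) || ((x == v) && (y == u)) then y else x.
Definition T3 (u v x y z : T) := Pf u v (Pf u v x y) (Pf u v z x).

Lemma T3E u v x y z : u != v -> T3 u v x y z =
  if (((x == u) && (y == v)) || ((x == v) && (y == u))) && (z != u) && (z != v) then y else x.
Proof.
move=> huv. rewrite /T3 /Pf.
case: (eqVneq x u) => [->|xu]; case: (eqVneq y v) => [->|yv];
case: (eqVneq x v) => [xv|xv]; case: (eqVneq y u) => [yu|yu];
case: (eqVneq z u) => [zu|zu]; case: (eqVneq z v) => [zv|zv];
  subst => //=; rewrite ?eqxx /= ?(negbTE huv) ?(negbTE xu) ?(negbTE yv) ?(negbTE xv) ?(negbTE yu)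
  ?(negbTE zu) ?(negbTE zv) //=.
all: rewrite ?eqxx ?andbF ?andbT ?orbF ?orbT //=; try by case: ifP.
Qed.

Definition Gv (a1 a2 a3 a4 x1 x2 x3 x4 : T) :=
  T3 a1 a2 x1 x2 (T3 a1 a4 x1 (T3 a3 a4 x3 x4 x1) x3).

Variables (a1 a2 a3 a4 : T).
Hypotheses (d12 : a1 != a2) (d13 : a1 != a3) (d14 : a1 != a4) (d23 : a2 != a3)
  (d24 : a2 != a4) (d34 : a3 != a4).

Lemma Gv_star : Gv a1 a2 a3 a4 a1 a2 a3 a4 = a2.
Proof.
have d31 : a3 != a1 by rewrite eq_sym.
have d41 : a4 != a1 by rewrite eq_sym.
have d42 : a4 != a2 by rewrite eq_sym.
rewrite /Gv (T3E _ _ _ d34) !eqxx d13 d14 /=.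
rewrite (T3E _ _ _ d14) !eqxx d31 d34 /=.
by rewrite (T3E _ _ _ d12) !eqxx d41 d42.
Qed.

Lemma Gv_dev x1 x2 x3 x4 : Gv a1 a2 a3 a4 x1 x2 x3 x4 != x1 ->
  [/\ x1 = a1, x2 = a2, x3 = a3 & x4 = a4].
Proof.
rewrite /Gv. set w0 := T3 a3 a4 x3 x4 x1. set w := T3 a1 a4 x1 w0 x3.
rewrite T3E //. case: ifP => [/andP [/andP [H12 wa1] wa2] _|]; last by rewrite eqxx.
have hx1 : (x1 == a1) || (x1 == a2) by case/orP: H12 => /andP [-> _] //; rewrite orbT.
move: wa1 wa2; rewrite /w T3E //.
case: ifP => [/andP [/andP [H14 x3a1] x3a4] wa1 wa2|_ wa1 wa2]; last first.
  by move: hx1; rewrite (negbTE wa1) (negbTE wa2).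
case/orP: H14 => /andP [/eqP e1 /eqP e2]; last first.
  by move: hx1; rewrite e1 eq_sym (negbTE d14) eq_sym (negbTE d24).
subst x1.
have ex2 : x2 = a2.
  by move: H12; rewrite eqxx (negbTE d12) /= orbF => /eqP.
move: e2; rewrite /w0 T3E //. case: ifP => [/andP [/andP [H34 _] _] e4|_ e3]; last first.
  by move: x3a4; rewrite e3 eqxx.
subst x4. case/orP: H34 => /andP [/eqP e3 h]; first by [].
by move: h; rewrite eq_sym (negbTE d34).
Qed.

End Sem.


Section Final.
Variables (X : finType) (k : nat) (C : {set {ffun kset X k -> X}}).
Hypotheses (hCs : symmetric_family C) (hCc : choice_family C) (hC0 : C != set0)
  (hk : 1 < k) (hkX : k < #|X|) (hX : 4 < #|X|).
Variable f : {ffun 'I_2 -> X} -> X.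
Hypotheses (Ff : Fr C f) (nm : ~ monarchy f).

Lemma app2_eta (h : {ffun 'I_2 -> X} -> X) x : h x = app2 h (x ord0) (x ord_max).
Proof. by rewrite /app2 -mk2_eta. Qed.

Lemma Pex u v : u != v -> exists h, Fr C h /\ forall x y, app2 h x y = Pf u v x y.
Proof.
move=> huv.
have cf := cons2 hCs hCc hC0 hk hkX Ff.
pose T0 := [set xy : X * X | app2 f xy.1 xy.2 == xy.2].
have hT0 : Rz C T0.
  exists f; split => // x y nxy. rewrite inE /=.
  by case: (cf x y) => ->; [rewrite (negbTE nxy)|rewrite eqxx].
have [a [b [hab habT]]] : exists a b, a != b /\ (a, b) \in T0.
  case: (boolP [exists a, exists b, (a != b) && (app2 f a b == b)]).
    by move=> /existsP [a /existsP [b /andP [h1 h2]]]; exists a, b; rewrite inE.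
  move=> H. exfalso; apply: nm; exists ord0 => x.
  rewrite app2_eta. case: (eqVneq (x ord0) (x ord_max)) => [<-|n01].
    exact: (idem2 _ Ff).
  case: (cf (x ord0) (x ord_max)) => // e.
  move: H; rewrite negb_exists => /forallP /(_ (x ord0)).
  by rewrite negb_exists => /forallP /(_ (x ord_max)); rewrite n01 e eqxx.
have [c [d [hcd hcdT]]] : exists c d, c != d /\ (c, d) \notin T0.
  case: (boolP [exists c, exists d, (c != d) && (app2 f c d != d)]).
    by move=> /existsP [c /existsP [d /andP [h1 h2]]]; exists c, d; rewrite inE.
  move=> H. exfalso; apply: nm; exists ord_max => x.
  rewrite app2_eta. case: (eqVneq (x ord0) (x ord_max)) => [->|n01].
    exact: (idem2 _ Ff).
  case: (cf (x ord0) (x ord_max)) => // e.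
  move: H; rewrite negb_exists => /forallP /(_ (x ord0)).
  by rewrite negb_exists => /forallP /(_ (x ord_max)); rewrite n01 e n01.
have [h [Fh hs]] := RbA hCs huv hX hT0 hab habT hcd hcdT.
exists h; split => // x y.
case: (eqVneq x y) => [<-|nxy].
  by rewrite (idem2 _ Fh) /Pf; case: ifP.
rewrite hs // inE /=.
have hvu : v != u by rewrite eq_sym.
case: (orbP huv nxy) => [->->|->->|-> yp yq|-> xp xq|-> yp yq|-> xp xq|xp xq yp yq];
  rewrite /Pf ?eqxx ?(negbTE huv) ?(negbTE hvu) ?(negbTE yp) ?(negbTE yq)
    ?(negbTE xp) ?(negbTE xq) ?orbT //.
Qed.

End Final.

Definition T3o (X : finType) (h : {ffun 'I_2 -> X} -> X) (u1 u2 u3 : {ffun 'I_4 -> X} -> X) :=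
  fun x => app2 h (app2 h (u1 x) (u2 x)) (app2 h (u3 x) (u1 x)).

Lemma Fr_T3o (X : finType) k (C : {set {ffun kset X k -> X}}) h u1 u2 u3 :
  Fr C h -> Fr C u1 -> Fr C u2 -> Fr C u3 -> Fr C (T3o h u1 u2 u3).
Proof. by move=> *; apply: Fr_b2 => //; apply: Fr_b2. Qed.

Lemma T3o_E (X : finType) (h : {ffun 'I_2 -> X} -> X) u v u1 u2 u3 :
  (forall x y, app2 h x y = Pf u v x y) ->
  forall x, T3o h u1 u2 u3 x = T3 u v (u1 x) (u2 x) (u3 x).
Proof. by move=> hs x; rewrite /T3o !hs. Qed.

Theorem claim13p7 (X : finType) (k : nat)
  (C : {set {ffun kset X k -> X}})
  (hX : 5 <= #|X|) (hk1 : 5 < k) (hk2 : k < #|X| - 5)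
  (hCc : choice_family C) (hC0 : C != set0) (hCs : symmetric_family C)
  (hr : rF_eq C 2)
  (astar : {ffun 'I_4 -> X}) (ha : injective astar) :
  exists g : {ffun 'I_4 -> X} -> X,
    Fr C g /\
    (forall b : {ffun 'I_4 -> X}, ~ injective b -> g b = b ord0) /\
    g astar = astar (inord 1).
Proof.
case: hr => [[f [Ff nm]] _].
have hk' : 1 < k by apply: leq_trans hk1.
have hkX : k < #|X| by apply: (leq_trans hk2); exact: leq_subr.
pose i1 : 'I_4 := inord 1. pose i2 : 'I_4 := inord 2. pose i3 : 'I_4 := inord 3.
have d : forall i j : 'I_4, i != j -> astar i != astar j by move=> i j; rewrite (inj_eq ha).
have n01 : (ord0 : 'I_4) != i1 by apply/eqP => /(congr1 val); rewrite /= inordK.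
have n03 : (ord0 : 'I_4) != i3 by apply/eqP => /(congr1 val); rewrite /= inordK.
have n23 : i2 != i3 by apply/eqP => /(congr1 val); rewrite /= !inordK.
have n02 : (ord0 : 'I_4) != i2 by apply/eqP => /(congr1 val); rewrite /= inordK.
have n12 : i1 != i2 by apply/eqP => /(congr1 val); rewrite /= !inordK.
have n13 : i1 != i3 by apply/eqP => /(congr1 val); rewrite /= !inordK.
have [h12 [F12 s12]] := Pex hCs hCc hC0 hk' hkX hX Ff nm (d _ _ n01).
have [h14 [F14 s14]] := Pex hCs hCc hC0 hk' hkX hX Ff nm (d _ _ n03).
have [h34 [F34 s34]] := Pex hCs hCc hC0 hk' hkX hX Ff nm (d _ _ n23).
pose pr (i : 'I_4) := fun x : {ffun 'I_4 -> X} => x i.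
pose g := T3o h12 (pr ord0) (pr i1) (T3o h14 (pr ord0) (T3o h34 (pr i2) (pr i3) (pr ord0)) (pr i2)).
have gE : forall x, g x = Gv (astar ord0) (astar i1) (astar i2) (astar i3)
                            (x ord0) (x i1) (x i2) (x i3).
  by move=> x; rewrite /g (T3o_E _ _ _ s12) (T3o_E _ _ _ s14) (T3o_E _ _ _ s34).
exists g; split; [|split].
- by apply: Fr_T3o => //; try apply: Fr_proj; apply: Fr_T3o => //; try apply: Fr_proj;
    apply: Fr_T3o => //; apply: Fr_proj.
- move=> b nb. apply/eqP; apply: contraT => H.
  rewrite gE in H.
  have [e0 e1 e2 e3] := Gv_dev (d _ _ n01) (d _ _ n03) (d _ _ n13) (d _ _ n23) H.
  exfalso; apply: nb.
  have -> : b = astar.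
    apply/ffunP => i. case: i => [[|[|[|[|m]]]] hi] //.
    + by have -> : Ordinal hi = ord0 by apply: val_inj.
    + by have -> : Ordinal hi = i1 by apply: val_inj; rewrite /= inordK.
    + by have -> : Ordinal hi = i2 by apply: val_inj; rewrite /= inordK.
    + by have -> : Ordinal hi = i3 by apply: val_inj; rewrite /= inordK.
  exact: ha.
- by rewrite gE Gv_star //; exact: d.
Qed.
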